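(* Let $G=(V,E)$ be a connected network with $N\ge 2$ nodes, and let $A=(\alpha_1,\dots,\alpha_{N-1})$ be its $\alpha$-array. Then $$\Big(\tfrac{N(N-1)}{2},0,\dots,0\Big)\succcurlyeq A\succcurlyeq C:=(N-1,N-2,\dots,1)$$ in the extended majorization order. Explicitly, $\sum_{j=1}^{N-1}\alpha_j=\sum_{j=1}^{N-1}(N-j)=\frac{N(N-1)}{2}$, and for every $i=1,\dots,N-2$, $$\frac{N(N-1)}{2}\ \ge\ \sum_{j=1}^{i}\alpha_j\ \ge\ \sum_{j=1}^{i}(N-j).$$
   Context: A network is a finite, simple, undirected, unweighted graph $G=(V,E)$, assumed connected, with $N=\#V$ nodes. The distance $d(u,v)$ between two nodes is the number of edges on a shortest path between them. For $j=1,\dots,N-1$, $\alpha_j$ denotes the number of unordered pairs $\{u,v\}$ of distinct nodes with $d(u,v)=j$; the array $A=(\alpha_1,\dots,\alpha_{N-1})$ is the $\alpha$-array of $G$. Extended majorization: for two sequences $X=(x_1,\dots,x_{N-1})$, $Y=(y_1,\dots,y_{N-1})$ of non-negative numbers (not necessarily ordered), $X\succcurlyeq Y$ means $\sum_{j=1}^{i}x_j\ge\sum_{j=1}^{i}y_j$ for all $i=1,\dots,N-2$ and $\sum_{j=1}^{N-1}x_j=\sum_{j=1}^{N-1}y_j$. Note that $C=(N-1,\dots,1)$ is the $\alpha$-array of the path (chain) on $N$ nodes. *)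

(* Defs.v *)
From mathcomp Require Import all_boot.
Set Implicit Arguments. Unset Strict Implicit. Unset Printing Implicit Defensive.

Definition simple_graph (T : finType) (e : rel T) : Prop :=
  symmetric e /\ irreflexive e.

Definition walk_k (T : finType) (e : rel T) (u v : T) (k : nat) : bool :=
  [exists p : k.-tuple T, path e u p && (last u p == v)].

Definition connected_graph (T : finType) (e : rel T) : Prop :=
  forall u v : T, exists k, walk_k e u v k.

(* graph distance: least k such that a walk of k edges joins u to v
   (searched among 0..#|T|-1; a shortest walk is a path, so this is exact
   in a connected graph) *)
Definition dist (T : finType) (e : rel T) (u v : T) : nat :=
  find (walk_k e u v) (iota 0 #|T|).

Definition alpha (T : finType) (e : rel T) (j : nat) : nat :=
  #|[set S : {set T} | [exists u, exists v,
       [&& u != v, S == [set u; v] & dist e u v == j]]]|.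

(* Main.v *)
Require Import Defs.
From mathcomp Require Import all_boot.
From mathcomp Require Import zify.
Set Implicit Arguments. Unset Strict Implicit. Unset Printing Implicit Defensive.

Lemma walkP (T : finType) (e : rel T) u v k :
  walk_k e u v k <-> exists p : seq T, [/\ size p = k, path e u p & last u p = v].
Proof.
split.
  move/existsP => [p /andP [hp /eqP hl]].
  by exists p; split=> //; exact: size_tuple.
move=> [p [hs hp hl]]; apply/existsP.
have hs' : size p == k by apply/eqP.
by exists (Tuple hs'); rewrite /= hp hl eqxx.
Qed.

Lemma dist_lt_walk (T : finType) (e : rel T) : connected_graph e ->
  forall u v, dist e u v < #|T| /\ walk_k e u v (dist e u v).
Proof.
move=> hc u v; have [k hk] := hc u v.
move/walkP: hk => [p [_ hp hl]].
rewrite -hl; case: (shortenP hp) => p' hp' hu _.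
have hsz : size p' < #|T|.
  have := max_card (mem (u :: p')).
  by move/card_uniqP: hu => -> /=.
have hh : has (walk_k e u (last u p')) (iota 0 #|T|).
  apply/hasP; exists (size p'); first by rewrite mem_iota.
  by apply/walkP; exists p'.
split; first by rewrite /dist -{2}(size_iota 0 #|T|) -has_find.
have := nth_find 0 hh.
move: hh; rewrite has_find size_iota => hh.
by rewrite nth_iota // add0n.
Qed.

Lemma dist_le (T : finType) (e : rel T) u v k :
  walk_k e u v k -> k < #|T| -> dist e u v <= k.
Proof.
move=> hw hk; rewrite leqNgt; apply/negP => hlt.
have := before_find 0 hlt.
by rewrite nth_iota // add0n hw.
Qed.

Lemma walk_ext (T : finType) (e : rel T) u x z k :
  walk_k e u x k -> e x z -> walk_k e u z k.+1.
Proof.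
move/walkP => [p [hs hp hl]] he; apply/walkP; exists (rcons p z).
by rewrite size_rcons rcons_path hp last_rcons hl hs he.
Qed.

Lemma dist_step (T : finType) (e : rel T) : connected_graph e ->
  forall u x z r, dist e u x <= r -> e x z -> dist e u z <= r.+1.
Proof.
move=> hc u x z r hr he.
have [hlt hw] := dist_lt_walk hc u x.
have [hlt2 _] := dist_lt_walk hc u z.
case: (ltnP (dist e u x).+1 #|T|) => h.
  have := dist_le (walk_ext hw he) h; lia.
lia.
Qed.

Lemma dist_refl (T : finType) (e : rel T) u : dist e u u = 0.
Proof.
have hT : 0 < #|T| by apply/card_gt0P; exists u.
have hw : walk_k e u u 0 by apply/walkP; exists [::].
have := dist_le hw hT; lia.
Qed.

Lemma dist0 (T : finType) (e : rel T) : connected_graph e ->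
  forall u v, dist e u v = 0 -> u = v.
Proof.
move=> hc u v h0; have [_ hw] := dist_lt_walk hc u v.
move: hw; rewrite h0 => /walkP [p [hs _ hl]].
by case: p hs hl.
Qed.

Lemma last_rev_belast (T : Type) (x : T) p :
  last (last x p) (rev (belast x p)) = x.
Proof. by case: p => [|y p] //=; rewrite rev_cons last_rcons. Qed.

Lemma dist_sym_le (T : finType) (e : rel T) : symmetric e -> connected_graph e ->
  forall u v, dist e u v <= dist e v u.
Proof.
move=> hs hc u v.
have [hlt hw] := dist_lt_walk hc v u.
move/walkP: hw => [p [hsz hp hl]].
apply: dist_le hlt; apply/walkP; exists (rev (belast v p)).
rewrite size_rev size_belast hsz -hl rev_path last_rev_belast; split=> //.
by rewrite (@eq_path _ _ e) // => a b; rewrite hs.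
Qed.

Lemma dist_sym (T : finType) (e : rel T) : symmetric e -> connected_graph e ->
  forall u v, dist e u v = dist e v u.
Proof.
move=> hs hc u v; apply/eqP; rewrite eqn_leq.
by rewrite !dist_sym_le.
Qed.

Lemma cutT (T : finType) (e : rel T) : connected_graph e ->
  forall (A : {set T}) a b, a \in A -> b \notin A ->
  exists x y, [/\ x \in A, y \notin A & e x y].
Proof.
move=> hc A a b ha hb; have [k /walkP [p [_ hp hl]]] := hc a b.
elim: p a ha hp hl => [|y p IH] a ha /=.
  by move=> _ hab; rewrite -hab ha in hb.
move=> /andP [he hp] hl.
case: (boolP (y \in A)) => hy.
  exact: (IH y hy hp hl).
by exists a, y.
Qed.

Definition cutp (T : finType) (e : rel T) (P : {set T}) :=
  forall A : {set T}, A \subset P -> forall a b, a \in A -> b \in P -> b \notin A ->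
  exists x y, [/\ x \in A, y \in P, y \notin A & e x y].

Lemma ball (T : finType) (e : rel T) : connected_graph e ->
  forall (P : {set T}) y, cutp e P -> y \in P ->
  forall r, minn r.+1 #|P| <= #|[set w in P | dist e y w <= r]|.
Proof.
move=> hc P y hP hy; elim=> [|r IH].
  have : 0 < #|[set w in P | dist e y w <= 0]|.
    by apply/card_gt0P; exists y; rewrite inE hy dist_refl.
  lia.
set B := [set w in P | dist e y w <= r] in IH *.
set B' := [set w in P | dist e y w <= r.+1].
have sBB : B \subset B'.
  by apply/subsetP => w; rewrite !inE => /andP [-> h] /=; lia.
case: (boolP (P \subset B)) => hPB.
  have := subset_leq_card (subset_trans hPB sBB); lia.
have [b hbP hbB] := subsetPn hPB.
have sB : B \subset P by apply/subsetP => w; rewrite inE => /andP [].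
have yB : y \in B by rewrite inE hy dist_refl.
have [x [z [hx hz hzB he]]] := hP B sB y b yB hbP hbB.
have sz : z |: B \subset B'.
  apply/subsetP => w; rewrite !inE => /orP [/eqP -> | /andP [-> h]] /=.
    rewrite hz /=; apply: dist_step hc _ _ _ _ _ he.
    by move: hx; rewrite inE => /andP [].
  lia.
have := subset_leq_card sz; rewrite cardsU1 hzB /=; lia.
Qed.

Definition Q (T : finType) (e : rel T) (P : {set T}) i :=
  [set S : {set T} | [exists u, exists v,
     [&& u != v, S == [set u; v], u \in P, v \in P & dist e u v <= i]]].

Lemma Q_mono (T : finType) (e : rel T) (P P' : {set T}) i :
  P \subset P' -> Q e P i \subset Q e P' i.
Proof.
move=> sP; apply/subsetP => S; rewrite !inE => /existsP [u /existsP [v]].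
move=> /and5P [h1 h2 h3 h4 h5]; apply/existsP; exists u; apply/existsP; exists v.
by rewrite h1 h2 (subsetP sP _ h3) (subsetP sP _ h4) h5.
Qed.

Definition f (k i : nat) := \sum_(1 <= j < i.+1) (k - j).

Lemma fS k i : f k.+1 i = f k i + minn i k.
Proof.
rewrite /f; elim: i => [|i IH]; first by rewrite !big_geq //; lia.
rewrite !(@big_nat_recr _ _ _ i.+1) //= IH; lia.
Qed.

Lemma f0 i : f 0 i = 0.
Proof. by rewrite /f big1. Qed.

Lemma set2_inj (T : finType) (y w1 w2 : T) :
  w1 != y -> [set y; w1] = [set y; w2] -> w1 = w2.
Proof.
move=> hne heq; have : w1 \in [set y; w2] by rewrite -heq !inE eqxx orbT.
by rewrite !inE (negbTE hne) => /eqP.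
Qed.

Lemma grow (T : finType) (e : rel T) : simple_graph e -> connected_graph e ->
  forall i k, 0 < k <= #|T| ->
  exists P : {set T}, [/\ #|P| = k, cutp e P & f k i <= #|Q e P i|].
Proof.
move=> [hs hirr] hc i; elim=> [|k IH] //.
case: (posnP k) => [-> hkN|hk hkN].
  have hT : 0 < #|T| by lia.
  have /card_gt0P [v0 _] := hT.
  exists [set v0]; split; first by rewrite cards1.
    move=> A sA a b ha hb hbA; move: hb; rewrite !inE => /eqP hb.
    have := subsetP sA _ ha; rewrite !inE => /eqP ha'.
    by move: hbA; rewrite hb -ha' ha.
  by rewrite fS f0.
have [P [hP hcut hf]] := IH (ltac:(lia)).
have hPT : ~~ ([set: T] \subset P).
  apply/negP => hs'; have := subset_leq_card hs'; rewrite cardsT hP; lia.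
have [b _ hb] := subsetPn hPT.
have [a ha] : exists a, a \in P by apply/card_gt0P; rewrite hP.
have [x [y [hx hy he]]] := cutT hc ha hb.
have hcut' : cutp e (y |: P).
  move=> A sA a' b' ha' hb' hbA.
  have hy' : y \in y |: P by rewrite setU11.
  have hx' : x \in y |: P by rewrite !inE hx orbT.
  case: (boolP (x \in A)) => hxA; case: (boolP (y \in A)) => hyA.
  + have hb'P : b' \in P.
      move: hb'; rewrite !inE => /orP [/eqP hby|//].
      by move: hbA; rewrite hby hyA.
    have sAP : A :&: P \subset P by apply: subsetIr.
    have [x' [y' [hx2 hy2 hyA2 he']]] :=
      hcut _ sAP x b' ltac:(by rewrite !inE hxA hx) hb'P ltac:(by rewrite !inE negb_and hbA).
    exists x', y'; split => //.
    + by move: hx2; rewrite !inE => /andP [].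
    + by rewrite !inE hy2 orbT.
    + by move: hyA2; rewrite !inE hy2 andbT.
  + by exists x, y.
  + by exists y, x; rewrite hs.
  + have ha'P : a' \in P.
      move: (subsetP sA _ ha'); rewrite !inE => /orP [/eqP hay|//].
      by move: hyA; rewrite -hay ha'.
    have sAP : A :&: P \subset P by apply: subsetIr.
    have [x' [y' [hx2 hy2 hyA2 he']]] :=
      hcut _ sAP a' x ltac:(by rewrite !inE ha' ha'P) hx ltac:(by rewrite !inE negb_and hxA).
    exists x', y'; split => //.
    + by move: hx2; rewrite !inE => /andP [].
    + by rewrite !inE hy2 orbT.
    + by move: hyA2; rewrite !inE hy2 andbT.
exists (y |: P); split => //.
  by rewrite cardsU1 hy hP.
set B := [set w in P | dist e y w <= i].
have hyB : y \in y |: P by rewrite setU11.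
have hB : minn i k <= #|B|.
  have := ball hc hcut' hyB i.
  have sB : [set w in y |: P | dist e y w <= i] \subset y |: B.
    apply/subsetP => w; rewrite !inE => /andP [/orP [->//|hw] hd].
    by rewrite hw hd orbT.
  have := subset_leq_card sB; rewrite cardsU1 cardsU1 hy hP; lia.
have hImg : #|[set [set y; w] | w in B]| = #|B|.
  apply: card_in_imset => w1 w2 h1 _; apply: set2_inj.
  apply/eqP => h; move: h1; rewrite !inE h => /andP [h' _].
  by rewrite h' in hy.
have hsub : Q e P i :|: [set [set y; w] | w in B] \subset Q e (y |: P) i.
  rewrite subUset Q_mono ?subsetUr //=.
  apply/subsetP => S /imsetP [w hw ->]; rewrite inE.
  move: hw; rewrite !inE => /andP [hw hd].
  apply/existsP; exists y; apply/existsP; exists w.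
  rewrite eqxx hd !inE eqxx hw orbT /= andbT.
  by apply/eqP => h; rewrite h hw in hy.
have hdisj : #|Q e P i :&: [set [set y; w] | w in B]| = 0.
  apply/eqP; rewrite cards_eq0 -subset0; apply/subsetP => S.
  rewrite inE => /andP [hQ /imsetP [w _ hS]].
  move: hQ; rewrite inE => /existsP [u /existsP [v /and5P [_ /eqP hS' hu hv _]]].
  have : y \in S by rewrite hS setU11.
  rewrite hS' !inE => /orP [/eqP h|/eqP h].
    by rewrite h hu in hy.
  by rewrite h hv in hy.
have := subset_leq_card hsub; rewrite cardsU hdisj subn0 hImg fS; lia.
Qed.

Lemma set2_cases (T : finType) (u v u' v' : T) :
  [set u; v] = [set u'; v'] -> (u = u' /\ v = v') \/ (u = v' /\ v = u').
Proof.
move=> h.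
have hu : u \in [set u'; v'] by rewrite -h !inE eqxx.
have hv : v \in [set u'; v'] by rewrite -h !inE eqxx orbT.
have hu' : u' \in [set u; v] by rewrite h !inE eqxx.
have hv' : v' \in [set u; v] by rewrite h !inE eqxx orbT.
move: hu hv hu' hv'; rewrite !inE.
move=> /orP[/eqP hu|/eqP hu] /orP[/eqP hv|/eqP hv] /orP[/eqP hu'|/eqP hu'] /orP[/eqP hv'|/eqP hv'];
  first [by left; split; congruence | by right; split; congruence].
Qed.

Lemma sumQ (T : finType) (e : rel T) : simple_graph e -> connected_graph e ->
  forall i, \sum_(1 <= j < i.+1) alpha e j = #|Q e setT i|.
Proof.
move=> [hs hirr] hc; elim=> [|i IH].
  rewrite big_geq //; apply/esym/eqP; rewrite cards_eq0 -subset0.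
  apply/subsetP => S; rewrite inE => /existsP [u /existsP [v /and5P [hne _ _ _ hd]]].
  have : dist e u v = 0 by lia.
  by move/(dist0 hc) => h; rewrite h eqxx in hne.
rewrite big_nat_recr //= IH /alpha.
set A := [set S : {set T} | _].
have -> : Q e setT i.+1 = Q e setT i :|: A.
  apply/setP => S; rewrite !inE; apply/idP/idP.
    move/existsP => [u /existsP [v /and5P [h1 h2 h3 h4 h5]]].
    case: (boolP (dist e u v == i.+1)) => hd.
      by apply/orP; right; apply/existsP; exists u; apply/existsP; exists v; rewrite h1 h2 hd.
    apply/orP; left; apply/existsP; exists u; apply/existsP; exists v.
    rewrite h1 h2 h3 h4 /=; move: hd h5; lia.
  case/orP => /existsP [u /existsP [v]].
    move=> /and5P [h1 h2 h3 h4 h5]; apply/existsP; exists u; apply/existsP; exists v.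
    by rewrite h1 h2 h3 h4 /=; lia.
  move=> /and3P [h1 h2 /eqP h5]; apply/existsP; exists u; apply/existsP; exists v.
  by rewrite h1 h2 !inE /= h5.
have hdisj : #|Q e setT i :&: A| = 0.
  apply/eqP; rewrite cards_eq0 -subset0; apply/subsetP => S.
  rewrite !inE => /andP [/existsP [u /existsP [v /and5P [_ /eqP h2 _ _ h5]]]].
  move=> /existsP [u' /existsP [v' /and3P [_ /eqP h2' /eqP h5']]].
  rewrite h2 in h2'.
  case: (set2_cases h2') => [[hu hv]|[hu hv]].
    by move: h5; rewrite hu hv h5'; lia.
  by move: h5; rewrite hu hv (dist_sym hs hc) h5'; lia.
by rewrite cardsU hdisj subn0.
Qed.

Lemma hsumC m : \sum_(1 <= j < m.+1) (m.+1 - j) = 'C(m.+1, 2).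
Proof.
elim: m => [|m IH]; first by rewrite big_geq.
rewrite big_nat_recl // binS bin1.
have -> : \sum_(1 <= j < m.+1) (m.+2 - j.+1) = \sum_(1 <= j < m.+1) (m.+1 - j).
  by apply: eq_bigr => j _; rewrite subSS.
by rewrite IH addnC.
Qed.

Lemma Q_all (T : finType) (e : rel T) : connected_graph e -> forall i, #|T| <= i.+1 ->
  [set S : {set T} | #|S| == 2] \subset Q e setT i.
Proof.
move=> hc i hi; apply/subsetP => S; rewrite inE => /cards2P [u [v [hne ->]]].
rewrite inE; apply/existsP; exists u; apply/existsP; exists v.
rewrite hne eqxx !inE /=; have [h _] := dist_lt_walk hc u v; lia.
Qed.

Lemma Q_sub (T : finType) (e : rel T) i :
  Q e setT i \subset [set S : {set T} | #|S| == 2].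
Proof.
apply/subsetP => S; rewrite /Q !inE => /existsP [u /existsP [v /and5P [h1 /eqP -> _ _ _]]].
rewrite ?inE; by rewrite cards2 h1.
Qed.

Theorem mainTheorem1 (T : finType) (e : rel T) :
  simple_graph e -> connected_graph e -> 2 <= #|T| ->
  let N := #|T| in
  \sum_(1 <= j < N) alpha e j = \sum_(1 <= j < N) (N - j) /\
  \sum_(1 <= j < N) (N - j) = N * (N - 1) %/ 2 /\
  (forall i, 1 <= i <= N - 2 ->
     N * (N - 1) %/ 2 >= \sum_(1 <= j < i.+1) alpha e j /\
     \sum_(1 <= j < i.+1) alpha e j >= \sum_(1 <= j < i.+1) (N - j)).
Proof.
move=> hsimp hc h2 N; rewrite /N.
have [n hn] : exists n, #|T| = n.+2 by exists (#|T| - 2); lia.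
have hC : #|[set S : {set T} | #|S| == 2]| = 'C(n.+2, 2) by rewrite card_draws hn.
have hQC : #|Q e setT n.+1| = 'C(n.+2, 2).
  apply/eqP; rewrite eqn_leq -hC subset_leq_card ?Q_sub //=.
  by rewrite subset_leq_card // Q_all // hn.
have hCd : 'C(n.+2, 2) = n.+2 * (n.+2 - 1) %/ 2.
  rewrite bin2 -divn2; congr (_ %/ 2); lia.
have [P [hP _ hf]] := grow hsimp hc 0 (ltac:(lia) : 0 < #|T| <= #|T|).
rewrite hn; split; first by rewrite (sumQ hsimp hc) hsumC hQC.
split; first by rewrite hsumC hCd.
move=> i hi; rewrite (sumQ hsimp hc); split.
  by rewrite -hCd -hC subset_leq_card // Q_sub.
have [P' [hP' _ hf']] := grow hsimp hc i (ltac:(lia) : 0 < #|T| <= #|T|).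
rewrite hn in hf'; apply: leq_trans hf' _.
by apply: subset_leq_card; apply: Q_mono; apply: subsetT.
Qed.
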